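(* Consider the $L$-layer LSTM described in the context, with $L\in\mathbb{N}$, and let $k\in\mathbb{Z}_{\ge 0}$. For every $l\in[L]$, the set $\mathcal{S}^{(l)}(k)=\mathcal{C}^{(l)}(k)\times\mathcal{H}^{(l)}(k)$ is invariant: for every input sequence $x(t)\in[-x_{\max},x_{\max}]^{n_x}$, $t\ge 0$, if $s^{(l)}(0)=(c^{(l)}(0),h^{(l)}(0))\in\mathcal{S}^{(l)}(k)$, then $s^{(l)}(t)=(c^{(l)}(t),h^{(l)}(t))\in\mathcal{S}^{(l)}(k)$ for all $t\in\mathbb{Z}_{\ge 0}$. Moreover, $\mathcal{S}^{(l)}(k+1)\subseteq\mathcal{S}^{(l)}(k)$ for all $k\in\mathbb{Z}_{\ge 0}$.
   Context: LSTM: fix $L\in\mathbb{N}$, dimensions $n_x,n_c$, and $x_{\max}>0$. For $l\in[L]$ let $n^{(l)}=n_x$ if $l=1$, $n^{(l)}=n_c$ if $l\ge2$; weights $W^{(l)}_*\in\mathbb{R}^{n_c\times n^{(l)}}$, $U^{(l)}_*\in\mathbb{R}^{n_c\times n_c}$, biases $b^{(l)}_*\in\mathbb{R}^{n_c}$, $*\in\{f,i,c,o\}$. With $\sigma(w)=1/(1+e^{-w})$, $\phi=\tanh$ (componentwise) and $\odot$ the componentwise product, for $t\in\mathbb{Z}_{\ge0}$: $c^{(l)}(t+1)=\sigma(W^{(l)}_f x^{(l)}(t)+U^{(l)}_f h^{(l)}(t)+b^{(l)}_f)\odot c^{(l)}(t)+\sigma(W^{(l)}_i x^{(l)}(t)+U^{(l)}_i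 h^{(l)}(t)+b^{(l)}_i)\odot\phi(W^{(l)}_c x^{(l)}(t)+U^{(l)}_c h^{(l)}(t)+b^{(l)}_c)$, $h^{(l)}(t+1)=\sigma(W^{(l)}_o x^{(l)}(t)+U^{(l)}_o h^{(l)}(t)+b^{(l)}_o)\odot\phi(c^{(l)}(t+1))$, where $x^{(1)}(t)=x(t)\in[-x_{\max},x_{\max}]^{n_x}$ and $x^{(l)}(t)=h^{(l-1)}(t+1)$ for $l\ge2$; $c^{(l)}\in\mathbb{R}^{n_c}$, $h^{(l)}\in(-1,1)^{n_c}$, and $s^{(l)}(t)=(c^{(l)}(t),h^{(l)}(t))$. Invariant-set quantities: let $x^{(l)}_{\max}=x_{\max}$ if $l=1$ and $=1$ if $l\ge2$. For a matrix $A$, $|A|$ is the entrywise absolute value; $\mathbf{1}_n$ the all-ones vector; $v_+=(\max\{v_{(j)},0\})_j$; $\|v\|_\infty=\max_j|v_{(j)}|$. For $\eta\ge0$ and $*\in\{f,i,o\}$: $G^{(l)}_*(\eta)=\|(x^{(l)}_{\max}|W^{(l)}_*|\mathbf{1}_{n^{(l)}}+\eta|U^{(l)}_*|\mathbf{1}_{n_c}+b^{(l)}_* )_+\|_\infty$, $G^{(l)}_c(\eta)=\|x^{(l)}_{\max}|W^{(l)}_c|\mathbf{1}_{n^{(l)}}+\eta|U^{(l)}_c|\mathbf{1}_{n_c}+|b^{(l)}_c|\|_\infty$. With $\eta^{(l)}(-1)=1$ and for $k\ge0$: $\overline{\sigma}^{(l)}_*(k)=\sigma(G^{(l)}_*(\eta^{(l)}(k-1)))$,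 $\overline{\phi}^{(l)}_c(k)=\phi(G^{(l)}_c(\eta^{(l)}(k-1)))$, $\overline{c}^{(l)}(k)=\overline{\sigma}^{(l)}_i(k)\overline{\phi}^{(l)}_c(k)/(1-\overline{\sigma}^{(l)}_f(k))$, $\eta^{(l)}(k)=\phi(\overline{c}^{(l)}(k))\overline{\sigma}^{(l)}_o(k)$. Finally $\mathcal{C}^{(l)}(k)=\{c\in\mathbb{R}^{n_c}:\|c\|_\infty\le\overline{c}^{(l)}(k)\}$ and $\mathcal{H}^{(l)}(k)=\{h\in\mathbb{R}^{n_c}:\|h\|_\infty\le\phi(\overline{c}^{(l)}(k))\overline{\sigma}^{(l)}_o(k)\}$. *)

(* Defs.v *)
From HB Require Import structures.
From mathcomp Require Import all_boot all_order all_algebra.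
From mathcomp Require Import all_classical all_reals all_analysis.
Set Implicit Arguments. Unset Strict Implicit. Unset Printing Implicit Defensive.
Import Order.TTheory GRing.Theory Num.Theory.
Local Open Scope ring_scope.

Section LSTM.
Variable R : realType.

Definition sigmoid (w : R) : R := 1 / (1 + expR (- w)).
Definition tanhR (w : R) : R := (expR w - expR (- w)) / (expR w + expR (- w)).

Inductive gate := gf | gi | gc | go.

Record lstm_layer (nin nc : nat) := LstmLayer {
  W : gate -> 'M[R]_(nc, nin);
  U : gate -> 'M[R]_(nc, nc);
  b : gate -> 'cV[R]_nc }.

Variables (nin nc : nat) (P : lstm_layer nin nc).

Definition preact (g : gate) (x : 'cV[R]_nin) (h : 'cV[R]_nc) : 'cV[R]_nc :=
  W P g *m x + U P g *m h + b P g.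

Definition cell_c (x : 'cV[R]_nin) (c h : 'cV[R]_nc) : 'cV[R]_nc :=
  \col_j (sigmoid (preact gf x h j 0) * c j 0
          + sigmoid (preact gi x h j 0) * tanhR (preact gc x h j 0)).

Definition cell_h (x : 'cV[R]_nin) (c h : 'cV[R]_nc) : 'cV[R]_nc :=
  \col_j (sigmoid (preact go x h j 0) * tanhR (cell_c x c h j 0)).

(** invariant-set quantities, xm = x^{(l)}_max *)
Definition rowabs_W (g : gate) (j : 'I_nc) : R := \sum_(m < nin) `|W P g j m|.
Definition rowabs_U (g : gate) (j : 'I_nc) : R := \sum_(m < nc) `|U P g j m|.

Definition Gpos (xm : R) (g : gate) (eta : R) : R :=
  \big[Num.max/0]_(j < nc)
     Num.max (xm * rowabs_W g j + eta * rowabs_U g j + b P g j 0) 0.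

Definition Gc (xm eta : R) : R :=
  \big[Num.max/0]_(j < nc)
     `|xm * rowabs_W gc j + eta * rowabs_U gc j + `|b P gc j 0| |.

(* cbar as a function of the previous eta *)
Definition cbar_of (xm eta : R) : R :=
  sigmoid (Gpos xm gi eta) * tanhR (Gc xm eta) / (1 - sigmoid (Gpos xm gf eta)).

Definition hbar_of (xm eta : R) : R :=
  tanhR (cbar_of xm eta) * sigmoid (Gpos xm go eta).

(* eta_prev xm k = eta^{(l)}(k-1); eta^{(l)}(-1) = 1 *)
Fixpoint eta_prev (xm : R) (k : nat) : R :=
  match k with
  | 0%N => 1
  | k'.+1 => hbar_of xm (eta_prev xm k')
  end.

Definition cbar (xm : R) (k : nat) : R := cbar_of xm (eta_prev xm k).
Definition eta (xm : R) (k : nat) : R := hbar_of xm (eta_prev xm k).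

Definition in_S (xm : R) (k : nat) (c h : 'cV[R]_nc) : Prop :=
  (forall j, `|c j 0| <= cbar xm k) /\ (forall j, `|h j 0| <= eta xm k).

End LSTM.

(** The L-layer network: layer 1 has parameters P1 (input dim n_x),
    layers l >= 2 have parameters Pd l (input dim n_c). *)

Definition S_layer (R : realType) (n_x n_c : nat) (xmax : R)
  (P1 : lstm_layer R n_x n_c) (Pd : nat -> lstm_layer R n_c n_c)
  (l k : nat) (c h : 'cV[R]_n_c) : Prop :=
  if l == 1%N then in_S P1 xmax k c h else in_S (Pd l) 1 k c h.

Definition is_lstm_traj (R : realType) (L n_x n_c : nat)
  (P1 : lstm_layer R n_x n_c) (Pd : nat -> lstm_layer R n_c n_c)
  (x : nat -> 'cV[R]_n_x) (c h : nat -> nat -> 'cV[R]_n_c) : Prop :=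
  (forall l j, (1 <= l <= L)%N -> `|h l 0%N j 0| < 1) /\
  (forall t, c 1%N t.+1 = cell_c P1 (x t) (c 1%N t) (h 1%N t) /\
             h 1%N t.+1 = cell_h P1 (x t) (c 1%N t) (h 1%N t)) /\
  (forall l t, (2 <= l <= L)%N ->
     c l t.+1 = cell_c (Pd l) (h l.-1 t.+1) (c l t) (h l t) /\
     h l t.+1 = cell_h (Pd l) (h l.-1 t.+1) (c l t) (h l t)).

(* Main.v *)
Require Import Defs.
From HB Require Import structures.
From mathcomp Require Import all_boot all_order all_algebra.
From mathcomp Require Import all_classical all_reals all_analysis.
From mathcomp Require Import lra ring.
Set Implicit Arguments. Unset Strict Implicit. Unset Printing Implicit Defensive.
Import Order.TTheory GRing.Theory Num.Theory.
Local Open Scope ring_scope.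

Section Real.
Variable R : realType.
Implicit Types (w a b : R).

Lemma sigmoid_gt0 w : 0 < sigmoid w.
Proof. rewrite /sigmoid; apply: divr_gt0 => //; apply: addr_gt0 => //; exact: expR_gt0. Qed.

Lemma sigmoid_lt1 w : sigmoid w < 1.
Proof.
rewrite /sigmoid ltr_pdivrMr ?mul1r; last by apply: addr_gt0 => //; exact: expR_gt0.
by rewrite ltrDl expR_gt0.
Qed.

Lemma normr_sig w : `|sigmoid w| = sigmoid w.
Proof. exact: gtr0_norm (sigmoid_gt0 w). Qed.

Lemma normr_sigM w y : `|sigmoid w * y| = sigmoid w * `|y|.
Proof. by rewrite normrM normr_sig. Qed.

Lemma sigmoid_mono a b : a <= b -> sigmoid a <= sigmoid b.
Proof.
move=> ab; rewrite /sigmoid !mul1r lef_pV2 ?posrE ?addr_gt0 ?expR_gt0 //.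
by rewrite lerD2l ler_expR lerN2.
Qed.

Lemma tanhE w : tanhR w = 1 - 2 / (expR w ^+ 2 + 1).
Proof.
rewrite /tanhR expRN.
have u0 : 0 < expR w by exact: expR_gt0.
set u := expR w in u0 *.
have un : u != 0 by rewrite gt_eqF.
have d1 : u ^+ 2 + 1 != 0 by rewrite gt_eqF // addr_gt0 // exprn_gt0.
have d2 : u + u^-1 != 0 by rewrite gt_eqF // addr_gt0 // invr_gt0.
by field; rewrite d1 un.
Qed.

Lemma tanh_mono a b : a <= b -> tanhR a <= tanhR b.
Proof.
move=> ab; rewrite !tanhE lerD2l lerN2; apply: ler_wpM2l => //.
rewrite lef_pV2 ?posrE ?addr_gt0 ?exprn_gt0 ?expR_gt0 // lerD2r.
rewrite ler_pXn2r ?nnegrE ?(ltW (expR_gt0 _)) //.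
by move: ab; rewrite -(@ler_expR R).
Qed.

Lemma tanh_lt1 w : `|tanhR w| < 1.
Proof.
rewrite tanhE.
have p : 0 < 2 / (expR w ^+ 2 + 1) by rewrite divr_gt0 // addr_gt0 ?exprn_gt0 ?expR_gt0.
have q : 2 / (expR w ^+ 2 + 1) < 2.
  rewrite ltr_pdivrMr ?addr_gt0 ?exprn_gt0 ?expR_gt0 //.
  have : 0 < expR w ^+ 2 by rewrite exprn_gt0 ?expR_gt0.
  by move=> h; rewrite mulrDr mulr1 ltrDr mulr_gt0.
rewrite ltr_norml; apply/andP; split; lra.
Qed.

Lemma tanh0 : tanhR (0 : R) = 0.
Proof. by rewrite /tanhR oppr0 subrr mul0r. Qed.

Lemma tanhN w : tanhR (- w) = - tanhR w.
Proof. by rewrite /tanhR opprK -mulNr opprB [expR w + _]addrC. Qed.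

Lemma tanh_ge0 w : 0 <= w -> 0 <= tanhR w.
Proof. by move=> h; rewrite -tanh0; exact: tanh_mono. Qed.

Lemma tanh_norm w : `|tanhR w| <= tanhR `|w|.
Proof.
case: (lerP 0 w) => h.
  by rewrite (ger0_norm h) ger0_norm // tanh_ge0.
have : tanhR w <= 0 by rewrite -(tanh0 ) tanh_mono // ltW.
by move=> h2; rewrite (ltr0_norm h) tanhN ler0_norm.
Qed.


Section Layer.
Variables (nin nc : nat) (P : lstm_layer R nin nc).
Implicit Types (x : 'cV[R]_nin) (c h : 'cV[R]_nc) (xm e : R) (j : 'I_nc) (g : gate).

Lemma mx_bound n (M : 'M[R]_(nc, n)) (v : 'cV[R]_n) xm j :
  (forall m, `|v m 0| <= xm) -> `|(M *m v) j 0| <= xm * \sum_(m < n) `|M j m|.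
Proof.
move=> hv; rewrite mxE; apply: le_trans (ler_norm_sum _ _ _) _.
rewrite mulr_sumr; apply: ler_sum => m _; rewrite normrM mulrC.
by apply: ler_wpM2r => //; exact: hv.
Qed.

Lemma rowU_ge0 g j : 0 <= rowabs_U P g j.
Proof. by apply: sumr_ge0 => m _. Qed.

Lemma rowW_ge0 g j : 0 <= rowabs_W P g j.
Proof. by apply: sumr_ge0 => m _. Qed.

Lemma preactE g x h j :
  preact P g x h j 0 = (W P g *m x) j 0 + (U P g *m h) j 0 + b P g j 0.
Proof. by rewrite /preact !mxE. Qed.

Lemma preact_le g x h xm e j :
  (forall m, `|x m 0| <= xm) -> (forall m, `|h m 0| <= e) ->
  preact P g x h j 0 <= xm * rowabs_W P g j + e * rowabs_U P g j + b P g j 0.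
Proof.
move=> hx hh; rewrite preactE lerD2r; apply: lerD.
  exact: le_trans (ler_norm _) (mx_bound _ _ hx).
exact: le_trans (ler_norm _) (mx_bound _ _ hh).
Qed.

Lemma preact_norm_le g x h xm e j :
  (forall m, `|x m 0| <= xm) -> (forall m, `|h m 0| <= e) ->
  `|preact P g x h j 0| <= xm * rowabs_W P g j + e * rowabs_U P g j + `|b P g j 0|.
Proof.
move=> hx hh; rewrite preactE; apply: le_trans (ler_normD _ _) _.
rewrite lerD2r; apply: le_trans (ler_normD _ _) _; apply: lerD.
  exact: mx_bound.
exact: mx_bound.
Qed.

Lemma Gpos_ge0 xm g e : 0 <= Gpos P xm g e.
Proof.
rewrite /Gpos; apply: (big_ind (fun z => 0 <= z)) => //.
  by move=> z y hz hy; rewrite le_max hz.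
by move=> i _; rewrite le_max lexx orbT.
Qed.

Lemma Gc_ge0 xm e : 0 <= Gc P xm e.
Proof.
rewrite /Gc; apply: (big_ind (fun z => 0 <= z)) => //.
by move=> z y hz hy; rewrite le_max hz.
Qed.

Lemma le_Gpos xm g e j :
  xm * rowabs_W P g j + e * rowabs_U P g j + b P g j 0 <= Gpos P xm g e.
Proof.
rewrite /Gpos; apply: le_trans (le_bigmax _ _ j).
by rewrite le_max lexx.
Qed.

Lemma le_Gc xm e j :
  `|xm * rowabs_W P gc j + e * rowabs_U P gc j + `|b P gc j 0| | <= Gc P xm e.
Proof. by rewrite /Gc; apply: (le_bigmax _ _ j). Qed.

Lemma Gpos_mono xm g e1 e2 : e1 <= e2 -> Gpos P xm g e1 <= Gpos P xm g e2.
Proof.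
move=> le12; rewrite {1}/Gpos; apply: bigmax_le; first exact: Gpos_ge0.
move=> i _; rewrite ge_max Gpos_ge0 andbT.
apply: le_trans (le_Gpos xm g e2 i).
by rewrite lerD2r lerD2l; apply: ler_wpM2r => //; exact: rowU_ge0.
Qed.

Lemma Gc_mono xm e1 e2 : 0 <= xm -> 0 <= e1 -> e1 <= e2 -> Gc P xm e1 <= Gc P xm e2.
Proof.
move=> hxm he1 le12; rewrite {1}/Gc; apply: bigmax_le; first exact: Gc_ge0.
move=> i _; apply: le_trans (le_Gc xm e2 i).
have h0 : 0 <= xm * rowabs_W P gc i + e1 * rowabs_U P gc i + `|b P gc i 0|.
  by apply: addr_ge0 => //; apply: addr_ge0; apply: mulr_ge0 => //; [exact: rowW_ge0 | exact: rowU_ge0].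
have h1 : 0 <= xm * rowabs_W P gc i + e2 * rowabs_U P gc i + `|b P gc i 0|.
  by apply: addr_ge0 => //; apply: addr_ge0; apply: mulr_ge0 => //; [exact: rowW_ge0 | exact: le_trans le12 | exact: rowU_ge0].
rewrite (ger0_norm h0) (ger0_norm h1).
by rewrite lerD2r lerD2l; apply: ler_wpM2r => //; exact: rowU_ge0.
Qed.

Lemma one_minus_sig_gt0 w : 0 < 1 - sigmoid w.
Proof. by rewrite subr_gt0 sigmoid_lt1. Qed.

Lemma cbar_of_ge0 xm e : 0 <= cbar_of P xm e.
Proof.
rewrite /cbar_of; apply: divr_ge0; last exact: ltW (one_minus_sig_gt0 _).
by apply: mulr_ge0; [exact: ltW (sigmoid_gt0 _) | apply: tanh_ge0; exact: Gc_ge0].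
Qed.

Lemma hbar_of_ge0 xm e : 0 <= hbar_of P xm e.
Proof.
rewrite /hbar_of; apply: mulr_ge0; last exact: ltW (sigmoid_gt0 _).
by apply: tanh_ge0; exact: cbar_of_ge0.
Qed.

Lemma hbar_of_le1 xm e : hbar_of P xm e <= 1.
Proof.
rewrite /hbar_of; apply: mulr_ile1.
- by apply: tanh_ge0; exact: cbar_of_ge0.
- exact: ltW (sigmoid_gt0 _).
- exact: le_trans (ler_norm _) (ltW (tanh_lt1 _)).
- exact: ltW (sigmoid_lt1 _).
Qed.

Lemma cbar_of_mono xm e1 e2 : 0 <= xm -> 0 <= e1 -> e1 <= e2 ->
  cbar_of P xm e1 <= cbar_of P xm e2.
Proof.
move=> hxm he1 le12; rewrite /cbar_of; apply: ler_pM.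
- by apply: mulr_ge0; [exact: ltW (sigmoid_gt0 _) | apply: tanh_ge0; exact: Gc_ge0].
- by rewrite invr_ge0; exact: ltW (one_minus_sig_gt0 _).
- apply: ler_pM.
  + exact: ltW (sigmoid_gt0 _).
  + by apply: tanh_ge0; exact: Gc_ge0.
  + by apply: sigmoid_mono; exact: Gpos_mono.
  + by apply: tanh_mono; exact: Gc_mono.
- rewrite lef_pV2 ?posrE ?one_minus_sig_gt0 //.
  by rewrite lerD2l lerN2; apply: sigmoid_mono; exact: Gpos_mono.
Qed.

Lemma hbar_of_mono xm e1 e2 : 0 <= xm -> 0 <= e1 -> e1 <= e2 ->
  hbar_of P xm e1 <= hbar_of P xm e2.
Proof.
move=> hxm he1 le12; rewrite /hbar_of; apply: ler_pM.
- by apply: tanh_ge0; exact: cbar_of_ge0.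
- exact: ltW (sigmoid_gt0 _).
- by apply: tanh_mono; exact: cbar_of_mono.
- by apply: sigmoid_mono; exact: Gpos_mono.
Qed.

Lemma eta_prev_ge0 xm k : 0 <= eta_prev P xm k.
Proof. by case: k => [|k] //=; exact: hbar_of_ge0. Qed.

Lemma eta_prev_dec xm k : 0 <= xm -> eta_prev P xm k.+1 <= eta_prev P xm k.
Proof.
move=> hxm; elim: k => [|k IH]; first exact: hbar_of_le1.
apply: hbar_of_mono => //; exact: hbar_of_ge0.
Qed.

Lemma cbar_eq xm e :
  cbar_of P xm e = sigmoid (Gpos P xm gf e) * cbar_of P xm e
                   + sigmoid (Gpos P xm gi e) * tanhR (Gc P xm e).
Proof.
rewrite /cbar_of.
have := one_minus_sig_gt0 (Gpos P xm gf e).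
set f := sigmoid (Gpos P xm gf e) => hf.
have hf0 : 1 - f != 0 by rewrite gt_eqF.
by field.
Qed.

Lemma cell_h_lt1 x c h j : `|cell_h P x c h j 0| < 1.
Proof.
rewrite mxE normr_sigM.
apply: le_lt_trans (tanh_lt1 (cell_c P x c h j 0)).
by apply: ler_piMl => //; exact: ltW (sigmoid_lt1 _).
Qed.

Lemma step xm k x c h : 0 <= xm -> (forall m, `|x m 0| <= xm) ->
  in_S P xm k c h -> in_S P xm k (cell_c P x c h) (cell_h P x c h).
Proof.
move=> hxm hx [hc hh].
have hh' : forall m, `|h m 0| <= eta_prev P xm k.
  move=> m; apply: le_trans (hh m) _; exact: eta_prev_dec.
set e := eta_prev P xm k in hh'.
have hc' : forall j, `|cell_c P x c h j 0| <= cbar P xm k.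
  move=> j; rewrite mxE /cbar -/e.
  apply: le_trans (ler_normD _ _) _.
  rewrite !normr_sigM [X in _ <= X]cbar_eq.
  apply: lerD.
    apply: ler_pM => //; first exact: ltW (sigmoid_gt0 _).
      apply: sigmoid_mono; apply: le_trans (le_Gpos xm gf e j).
      exact: preact_le.
  apply: ler_pM => //; first exact: ltW (sigmoid_gt0 _).
    apply: sigmoid_mono; apply: le_trans (le_Gpos xm gi e j).
    exact: preact_le.
  apply: le_trans (tanh_norm _) _; apply: tanh_mono.
  apply: le_trans (le_Gc xm e j); apply: le_trans (ler_norm _).
  exact: preact_norm_le.
split => // j.
rewrite mxE normr_sigM /eta /hbar_of -/e mulrC.
apply: ler_pM => //; first exact: ltW (sigmoid_gt0 _).
  apply: le_trans (tanh_norm _) _; apply: tanh_mono; exact: hc'.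
apply: sigmoid_mono; apply: le_trans (le_Gpos xm go e j).
exact: preact_le.
Qed.

Lemma in_S_dec xm k c h : 0 <= xm -> in_S P xm k.+1 c h -> in_S P xm k c h.
Proof.
move=> hxm [hc hh]; split => j.
  apply: le_trans (hc j) _; rewrite /cbar; apply: cbar_of_mono => //.
    exact: eta_prev_ge0.
  exact: eta_prev_dec.
apply: le_trans (hh j) _; rewrite /eta; apply: hbar_of_mono => //.
  exact: eta_prev_ge0.
exact: eta_prev_dec.
Qed.

End Layer.
End Real.

Theorem proposition4p1 (R : realType) (L n_x n_c : nat) (xmax : R)
  (P1 : lstm_layer R n_x n_c) (Pd : nat -> lstm_layer R n_c n_c)
  (k l : nat) :
  0 < xmax -> (1 <= l <= L)%N ->
  (forall (x : nat -> 'cV[R]_n_x) (c h : nat -> nat -> 'cV[R]_n_c),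
     (forall t j, `|x t j 0| <= xmax) ->
     is_lstm_traj L P1 Pd x c h ->
     S_layer xmax P1 Pd l k (c l 0%N) (h l 0%N) ->
     forall t, S_layer xmax P1 Pd l k (c l t) (h l t)) /\
  (forall k' (c0 h0 : 'cV[R]_n_c),
     S_layer xmax P1 Pd l k'.+1 c0 h0 -> S_layer xmax P1 Pd l k' c0 h0).
Proof.
move=> hx0 /andP[hl1 hlL]; rewrite /S_layer; split; last first.
  by move=> k' c0 h0; case: ifP => _; apply: in_S_dec => //; exact: ltW.
move=> x c h hx [H0 [H1 H2]] HS t; elim: t => [|t IH] //.
case: ifP => hl; move: IH HS; rewrite hl /= => IH _.
  move/eqP: hl => hl; subst l; case: (H1 t) => -> ->.
  by apply: step => //; exact: ltW.
have hl2 : (2 <= l <= L)%N.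
  rewrite hlL andbT; move: hl1 hl; clear; by case: l => [|[|l]].
case: (H2 l t hl2) => -> ->.
apply: step => //.
move=> m; apply: ltW.
case: (boolP (l.-1 == 1%N)) => hl'.
  by rewrite (eqP hl') (H1 t).2; exact: cell_h_lt1.
have hl3 : (2 <= l.-1 <= L)%N.
  apply/andP; split.
    move: hl1 hl hl'; clear; by case: l => [|[|[|l]]].
  by apply: leq_trans hlL; exact: leq_pred.
by rewrite (H2 _ t hl3).2; exact: cell_h_lt1.
Qed.
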